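(* Let $n\ge 1$ and let $\boldsymbol{\gamma}^{[k]}=(\boldsymbol{\alpha}^{[k]},\boldsymbol{\beta}^{[k]})\in\mathscr{W}$, $k\ge 0$, be corner cutting weights such that $\sup_{k\ge 0}\mu(\boldsymbol{\gamma}^{[k]})<1$. Let $\mathbf{P}^{[0]}=\{P^{[0]}_i\in\mathbb{R}^n,\ i\in\mathbb{Z}\}$ be an initial sequence of points for which there is $L>0$ with $\|P^{[0]}_{i+1}-P^{[0]}_i\|_\infty<L$ for all $i\in\mathbb{Z}$, and let $\mathbf{P}^{[k+1]}=CC_{\boldsymbol{\gamma}^{[k]}}(\mathbf{P}^{[k]})$ for $k\ge 0$. Then the corner cutting algorithm converges for $\mathbf{P}^{[0]}$: there exists a continuous function $F:\mathbb{R}\to\mathbb{R}^n$ such that $$\lim_{k\to+\infty}\sup_{i\in\mathbb{Z}}\|F(2^{-k}i)-P^{[k]}_i\|_\infty=0.$$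
   Context: $\mathscr{W}$ is the set of pairs $(\boldsymbol{\alpha},\boldsymbol{\beta})$ of real bi-infinite sequences $\boldsymbol{\alpha}=(\alpha_i)_{i\in\mathbb{Z}}$, $\boldsymbol{\beta}=(\beta_i)_{i\in\mathbb{Z}}$ such that $\inf_{i\in\mathbb{Z}}\min\{\alpha_i,\,1-\beta_i,\,\beta_i-\alpha_i\}>0$. For $\boldsymbol{\gamma}=(\boldsymbol{\alpha},\boldsymbol{\beta})\in\mathscr{W}$, $\mu(\boldsymbol{\gamma}):=\sup_{i\in\mathbb{Z}}\max\{\beta_i-\alpha_i,\ 1-\beta_{i-1}+\alpha_i\}$. The corner cutting operator $CC_{\boldsymbol{\gamma}}$ maps a sequence $\mathbf{P}=(P_i)_{i\in\mathbb{Z}}$ of points of $\mathbb{R}^n$ to the sequence given by $(CC_{\boldsymbol{\gamma}}(\mathbf{P}))_{2i}=(1-\alpha_i)P_i+\alpha_iP_{i+1}$ and $(CC_{\boldsymbol{\gamma}}(\mathbf{P}))_{2i+1}=(1-\beta_i)P_i+\beta_iP_{i+1}$, $i\in\mathbb{Z}$. *)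

(* Defs.v *)
From Stdlib Require Import Reals ZArith Lia Lra.
From Coquelicot Require Import Coquelicot.
Open Scope R_scope.

(* A point of R^n is represented by its coordinate function; only the
   coordinates j < n are relevant (norm and continuity only look at them). *)
Definition pt := nat -> R.

Fixpoint norm_inf (n : nat) (x : pt) : R :=
  match n with
  | O => 0
  | S m => Rmax (norm_inf m x) (Rabs (x m))
  end.

Definition pt_sub (x y : pt) : pt := fun j => x j - y j.
Definition pt_comb (a : R) (x y : pt) : pt := fun j => (1 - a) * x j + a * y j.

Definition rseq := Z -> R.
Definition pseq := Z -> pt.

Definition in_W (alpha beta : rseq) : Prop :=
  Rbar_lt (Finite 0)
    (Glb_Rbar (fun x => exists i : Z,
       x = Rmin (alpha i) (Rmin (1 - beta i) (beta i - alpha i)))).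

Definition mu (alpha beta : rseq) : Rbar :=
  Lub_Rbar (fun x => exists i : Z,
    x = Rmax (beta i - alpha i) (1 - beta (i - 1)%Z + alpha i)).

Definition CC (alpha beta : rseq) (P : pseq) : pseq :=
  fun m => let i := (m / 2)%Z in
    if Z.even m then pt_comb (alpha i) (P i) (P (i + 1)%Z)
    else pt_comb (beta i) (P i) (P (i + 1)%Z).

(* Main.v *)
Require Import Defs.
From Stdlib Require Import Reals ZArith Lia Lra.
From Coquelicot Require Import Coquelicot.
Open Scope R_scope.

Lemma Int_part_unique (r : R) (z : Z) : IZR z <= r < IZR z + 1 -> Int_part r = z.
Proof.
  intros [h1 h2]. destruct (base_Int_part r) as [b1 b2].
  assert (IZR (Int_part r) < IZR (z + 1)) by (rewrite plus_IZR; lra).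
  assert (IZR z < IZR (Int_part r + 1)) by (rewrite plus_IZR; lra).
  apply lt_IZR in H. apply lt_IZR in H0. lia.
Qed.

Lemma Int_part_bounds (r : R) : IZR (Int_part r) <= r < IZR (Int_part r) + 1.
Proof. destruct (base_Int_part r). lra. Qed.

Lemma Int_part_double (t : R) (k : nat) :
  Int_part (t * 2 ^ S k) = (2 * Int_part (t * 2 ^ k))%Z \/
  Int_part (t * 2 ^ S k) = (2 * Int_part (t * 2 ^ k) + 1)%Z.
Proof.
  destruct (Int_part_bounds (t * 2 ^ k)) as [h1 h2].
  set (i := Int_part (t * 2 ^ k)) in *.
  assert (e : t * 2 ^ S k = 2 * (t * 2 ^ k)) by (simpl; ring).
  destruct (Rlt_or_le (t * 2 ^ S k) (2 * IZR i + 1)).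
  - left. apply Int_part_unique. rewrite mult_IZR. lra.
  - right. apply Int_part_unique. rewrite plus_IZR, mult_IZR. lra.
Qed.


Lemma diff_bound (p a b : nat -> Z -> R) (mu L : R)
  (Hev : forall k i, p (S k) (2 * i)%Z = (1 - a k i) * p k i + a k i * p k (i + 1)%Z)
  (Hod : forall k i, p (S k) (2 * i + 1)%Z = (1 - b k i) * p k i + b k i * p k (i + 1)%Z)
  (Ha : forall k i, 0 <= a k i) (Hb : forall k i, b k i <= 1) (Hab : forall k i, a k i <= b k i)
  (Hm1 : forall k i, b k i - a k i <= mu)
  (Hm2 : forall k i, 1 - b k i + a k (i + 1)%Z <= mu)
  (H0 : forall i, Rabs (p 0%nat (i + 1)%Z - p 0%nat i) <= L) :
  forall k i, Rabs (p k (i + 1)%Z - p k i) <= L * mu ^ k.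
Proof.
  induction k; intros m.
  - simpl. rewrite Rmult_1_r. apply H0.
  - assert (Hm : (m = 2 * (m / 2) + m mod 2)%Z) by (apply Z.div_mod; lia).
    assert (Hr : (0 <= m mod 2 < 2)%Z) by (apply Z.mod_pos_bound; lia).
    set (i := (m / 2)%Z) in *.
    assert (HB : 0 <= L * mu ^ k).
    { eapply Rle_trans; [apply Rabs_pos | apply (IHk 0%Z)]. }
    destruct (Z.eq_dec (m mod 2) 0) as [e|e].
    + rewrite e, Z.add_0_r in Hm. rewrite Hm.
      replace (2 * i + 1)%Z with (2 * i + 1)%Z by lia.
      rewrite Hev, Hod.
      replace ((1 - b k i) * p k i + b k i * p k (i + 1)%Z -
               ((1 - a k i) * p k i + a k i * p k (i + 1)%Z))
        with ((b k i - a k i) * (p k (i + 1)%Z - p k i)) by ring.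
      rewrite Rabs_mult, Rabs_pos_eq by (specialize (Hab k i); lra).
      simpl. replace (L * (mu * mu ^ k)) with (mu * (L * mu ^ k)) by ring.
      assert (0 <= b k i - a k i) by (specialize (Hab k i); lra).
      apply Rmult_le_compat; [assumption|apply Rabs_pos|apply Hm1|apply IHk].
    + assert (e1 : (m mod 2 = 1)%Z) by lia. rewrite e1 in Hm. rewrite Hm.
      replace (2 * i + 1 + 1)%Z with (2 * (i + 1))%Z by lia.
      rewrite Hev, Hod.
      replace ((1 - a k (i + 1)%Z) * p k (i + 1)%Z + a k (i + 1)%Z * p k (i + 1 + 1)%Z -
               ((1 - b k i) * p k i + b k i * p k (i + 1)%Z))
        with ((1 - b k i) * (p k (i + 1)%Z - p k i) + a k (i+1)%Z * (p k (i + 1 + 1)%Z - p k (i+1)%Z)) by ring.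
      eapply Rle_trans; [apply Rabs_triang|].
      rewrite !Rabs_mult, (Rabs_pos_eq (1 - b k i)) by (specialize (Hb k i); lra).
      rewrite (Rabs_pos_eq (a k (i+1)%Z)) by apply Ha.
      simpl.
      specialize (IHk i) as I1. specialize (IHk (i+1)%Z) as I2.
      specialize (Hm2 k i). specialize (Hb k i). specialize (Ha k (i+1)%Z).
      assert (h1 : (1 - b k i) * Rabs (p k (i + 1)%Z - p k i) <= (1 - b k i) * (L * mu ^ k))
        by (apply Rmult_le_compat_l; lra).
      assert (h2 : a k (i+1)%Z * Rabs (p k (i + 1 + 1)%Z - p k (i + 1)%Z) <= a k (i+1)%Z * (L * mu ^ k))
        by (apply Rmult_le_compat_l; lra).
      assert (h3 : (1 - b k i + a k (i+1)%Z) * (L * mu ^ k) <= mu * (L * mu ^ k))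
        by (apply Rmult_le_compat_r; lra).
      nra.
Qed.

Definition gs (p : nat -> Z -> R) (k : nat) (t : R) : R := p k (Int_part (t * 2 ^ k)).

Lemma g_step (p : nat -> Z -> R) (B : nat -> R)
  (Hs0 : forall k i, Rabs (p (S k) (2 * i)%Z - p k i) <= B k)
  (Hs1 : forall k i, Rabs (p (S k) (2 * i + 1)%Z - p k i) <= B k) :
  forall k t, Rabs (gs p (S k) t - gs p k t) <= B k.
Proof.
  intros k t. unfold gs. destruct (Int_part_double t k) as [e|e]; rewrite e; auto.
Qed.

Lemma g_tele (p : nat -> Z -> R) (L mu : R) (hmu : mu < 1)
  (Hst : forall k t, Rabs (gs p (S k) t - gs p k t) <= L * mu ^ k) :
  forall k d t, Rabs (gs p (k + d) t - gs p k t) <= L * mu ^ k * (1 - mu ^ d) / (1 - mu).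
Proof.
  intros k d t. induction d.
  - rewrite Nat.add_0_r. simpl. replace (gs p k t - gs p k t) with 0 by ring.
    rewrite Rabs_R0. replace (L * mu ^ k * (1 - 1) / (1 - mu)) with 0 by (field; lra). lra.
  - replace (k + S d)%nat with (S (k + d)) by lia.
    replace (gs p (S (k + d)) t - gs p k t) with
      ((gs p (S (k + d)) t - gs p (k + d) t) + (gs p (k + d) t - gs p k t)) by ring.
    eapply Rle_trans; [apply Rabs_triang|].
    specialize (Hst (k + d)%nat t). rewrite pow_add in Hst.
    replace (L * mu ^ k * (1 - mu ^ S d) / (1 - mu)) with
      (L * (mu ^ k * mu ^ d) + L * mu ^ k * (1 - mu ^ d) / (1 - mu)) by (simpl; field; lra).
    lra.
Qed.

Lemma g_tail (p : nat -> Z -> R) (L mu : R) (hmu0 : 0 <= mu) (hmu : mu < 1) (hL : 0 < L)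
  (Hst : forall k t, Rabs (gs p (S k) t - gs p k t) <= L * mu ^ k) :
  forall k m t, (k <= m)%nat -> Rabs (gs p m t - gs p k t) <= L * mu ^ k / (1 - mu).
Proof.
  intros k m t hkm. replace m with (k + (m - k))%nat by lia.
  eapply Rle_trans; [apply (g_tele p L mu hmu Hst)|].
  unfold Rdiv. apply Rmult_le_compat_r.
  - apply Rlt_le, Rinv_0_lt_compat. lra.
  - assert (0 <= mu ^ (m - k)) by (apply pow_le; lra).
    assert (0 <= L * mu ^ k) by (apply Rmult_le_pos; [lra|apply pow_le; lra]).
    nra.
Qed.

Lemma g_limit (p : nat -> Z -> R) (L mu : R) (hmu0 : 0 <= mu) (hmu : mu < 1) (hL : 0 < L)
  (Hst : forall k t, Rabs (gs p (S k) t - gs p k t) <= L * mu ^ k) :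
  forall t k, Rabs (real (Lim_seq (fun m => gs p m t)) - gs p k t) <= L * mu ^ k / (1 - mu).
Proof.
  intros t.
  pose proof (g_tail p L mu hmu0 hmu hL Hst) as Ht.
  assert (Hc : ex_lim_seq_cauchy (fun m => gs p m t)).
  { intros [eps heps]. simpl.
    assert (hy : 0 < eps * (1 - mu) / (2 * L)).
    { apply Rdiv_lt_0_compat; [apply Rmult_lt_0_compat; lra | lra]. }
    destruct (pow_lt_1_zero mu ltac:(rewrite Rabs_pos_eq; lra) _ hy) as [N hN].
    exists N. intros n m hn hm.
    specialize (hN N (le_n N)). rewrite Rabs_pos_eq in hN by (apply pow_le; lra).
    pose proof (Ht N n t hn). pose proof (Ht N m t hm).
    replace (gs p n t - gs p m t) with ((gs p n t - gs p N t) - (gs p m t - gs p N t)) by ring.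
    eapply Rle_lt_trans; [apply Rabs_triang|]. rewrite Rabs_Ropp.
    assert (L * mu ^ N / (1 - mu) < eps / 2).
    { assert (h1 : L * mu ^ N < eps * (1 - mu) / 2).
      { apply (Rmult_lt_compat_l L) in hN; [|lra].
        replace (L * (eps * (1 - mu) / (2 * L))) with (eps * (1 - mu) / 2) in hN by (field; lra).
        exact hN. }
      apply (Rmult_lt_reg_r (1 - mu)); [lra|].
      replace (L * mu ^ N / (1 - mu) * (1 - mu)) with (L * mu ^ N) by (field; lra).
      lra. }
    lra. }
  apply ex_lim_seq_cauchy_corr in Hc.
  apply Lim_seq_correct' in Hc. apply is_lim_seq_Reals in Hc.
  set (l := real (Lim_seq (fun m => gs p m t))) in *.
  intros k. destruct (Rle_or_lt (Rabs (l - gs p k t)) (L * mu ^ k / (1 - mu))) as [h|h]; auto.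
  exfalso. destruct (Hc (Rabs (l - gs p k t) - L * mu ^ k / (1 - mu))) as [N hN]; [lra|].
  specialize (hN (Nat.max N k) ltac:(lia)). unfold R_dist in hN.
  pose proof (Ht k (Nat.max N k) t ltac:(lia)).
  assert (Rabs (l - gs p k t) <= Rabs (gs p (Nat.max N k) t - l) + Rabs (gs p (Nat.max N k) t - gs p k t)).
  { replace (l - gs p k t) with (- (gs p (Nat.max N k) t - l) + (gs p (Nat.max N k) t - gs p k t)) by ring.
    eapply Rle_trans; [apply Rabs_triang|]. rewrite Rabs_Ropp. lra. }
  lra.
Qed.

Lemma g_near (p : Z -> R) (c : R)
  (Hd : forall i, Rabs (p (i + 1)%Z - p i) <= c) (x y : R) :
  Rabs (x - y) < 1 -> Rabs (p (Int_part x) - p (Int_part y)) <= c.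
Proof.
  intros h. destruct (Int_part_bounds x) as [x1 x2]. destruct (Int_part_bounds y) as [y1 y2].
  apply Rabs_def2 in h. destruct h as [h1 h2].
  assert (IZR (Int_part x - Int_part y) < 2) by (rewrite minus_IZR; lra).
  assert (IZR (Int_part x - Int_part y) > -2) by (rewrite minus_IZR; lra).
  apply lt_IZR in H. apply Rgt_lt in H0. change (-2) with (IZR (-2)) in H0. apply lt_IZR in H0.
  assert (c0 : 0 <= c) by (eapply Rle_trans; [apply Rabs_pos|apply (Hd 0%Z)]).
  destruct (Z.eq_dec (Int_part x) (Int_part y)) as [e|e].
  - rewrite e. replace (p (Int_part y) - p (Int_part y)) with 0 by ring. rewrite Rabs_R0. lra.
  - destruct (Z.eq_dec (Int_part x) (Int_part y + 1)) as [e1|e1].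
    + rewrite e1. apply Hd.
    + assert (e2 : Int_part y = (Int_part x + 1)%Z) by lia. rewrite e2.
      rewrite <- Rabs_Ropp. replace (- (p (Int_part x) - p (Int_part x + 1)%Z)) with
        (p (Int_part x + 1)%Z - p (Int_part x)) by ring. apply Hd.
Qed.

Lemma F_cont (p : nat -> Z -> R) (L mu : R) (hmu0 : 0 <= mu) (hmu : mu < 1) (hL : 0 < L)
  (F : R -> R)
  (Hd : forall k i, Rabs (p k (i + 1)%Z - p k i) <= L * mu ^ k)
  (HF : forall t k, Rabs (F t - gs p k t) <= L * mu ^ k / (1 - mu)) :
  continuity F.
Proof.
  intros x0 eps heps.
  assert (hy : 0 < eps * (1 - mu) / (3 * L)).
  { apply Rdiv_lt_0_compat; [apply Rmult_lt_0_compat; lra | lra]. }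
  destruct (pow_lt_1_zero mu ltac:(rewrite Rabs_pos_eq; lra) _ hy) as [N hN].
  specialize (hN N (le_n N)). rewrite Rabs_pos_eq in hN by (apply pow_le; lra).
  assert (h1 : L * mu ^ N < eps * (1 - mu) / 3).
  { apply (Rmult_lt_compat_l L) in hN; [|lra].
    replace (L * (eps * (1 - mu) / (3 * L))) with (eps * (1 - mu) / 3) in hN by (field; lra).
    exact hN. }
  assert (h2 : L * mu ^ N / (1 - mu) < eps / 3).
  { apply (Rmult_lt_reg_r (1 - mu)); [lra|].
    replace (L * mu ^ N / (1 - mu) * (1 - mu)) with (L * mu ^ N) by (field; lra). lra. }
  assert (h3 : L * mu ^ N <= L * mu ^ N / (1 - mu)).
  { assert (0 <= L * mu ^ N) by (apply Rmult_le_pos; [lra|apply pow_le; lra]).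
    apply (Rmult_le_reg_r (1 - mu)); [lra|].
    replace (L * mu ^ N / (1 - mu) * (1 - mu)) with (L * mu ^ N) by (field; lra). nra. }
  assert (hp : 0 < 2 ^ N) by (apply pow_lt; lra).
  exists (/ 2 ^ N). split; [apply Rinv_0_lt_compat; exact hp|].
  intros x [_ hx]. unfold R_dist in *. simpl in *. unfold R_dist in hx.
  assert (hn : Rabs (gs p N x - gs p N x0) <= L * mu ^ N).
  { unfold gs. apply g_near; [apply Hd|].
    replace (x * 2 ^ N - x0 * 2 ^ N) with ((x - x0) * 2 ^ N) by ring.
    rewrite Rabs_mult, (Rabs_pos_eq (2 ^ N)) by lra.
    apply (Rmult_lt_compat_r (2 ^ N)) in hx; [|lra].
    rewrite Rinv_l in hx by lra. exact hx. }
  pose proof (HF x N). pose proof (HF x0 N).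
  assert (Rabs (F x - F x0) <= Rabs (F x - gs p N x) + Rabs (gs p N x - gs p N x0) + Rabs (F x0 - gs p N x0)).
  { replace (F x - F x0) with ((F x - gs p N x) + (gs p N x - gs p N x0) - (F x0 - gs p N x0)) by ring.
    eapply Rle_trans; [apply Rabs_triang|]. rewrite Rabs_Ropp.
    pose proof (Rabs_triang (F x - gs p N x) (gs p N x - gs p N x0)). lra. }
  unfold Rdist in *. lra.
Qed.

Lemma norm_inf_ge (n : nat) (x : pt) (j : nat) : (j < n)%nat -> Rabs (x j) <= norm_inf n x.
Proof.
  induction n; intros h; [lia|]. simpl.
  destruct (Nat.eq_dec j n) as [e|e].
  - subst. apply Rmax_r.
  - eapply Rle_trans; [apply IHn; lia|apply Rmax_l].
Qed.

Lemma norm_inf_le (n : nat) (x : pt) (c : R) : 0 <= c ->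
  (forall j, (j < n)%nat -> Rabs (x j) <= c) -> norm_inf n x <= c.
Proof.
  intros hc. induction n; intros h; simpl; auto.
  apply Rmax_lub; auto.
Qed.

Lemma CC_even (al be : rseq) (P : pseq) (i : Z) :
  CC al be P (2 * i)%Z = pt_comb (al i) (P i) (P (i + 1)%Z).
Proof.
  unfold CC. replace ((2 * i) / 2)%Z with i.
  - rewrite Z.even_mul. reflexivity.
  - symmetry. rewrite Z.mul_comm. apply Z.div_mul. lia.
Qed.

Lemma CC_odd (al be : rseq) (P : pseq) (i : Z) :
  CC al be P (2 * i + 1)%Z = pt_comb (be i) (P i) (P (i + 1)%Z).
Proof.
  unfold CC. replace ((2 * i + 1) / 2)%Z with i.
  - rewrite Z.even_add, Z.even_mul. reflexivity.
  - apply (Z.div_unique _ _ _ 1); lia.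
Qed.

Theorem theorem1 (n : nat) (hn : (1 <= n)%nat)
  (alpha beta : nat -> rseq)
  (hW : forall k : nat, in_W (alpha k) (beta k))
  (hmu : Rbar_lt (Rbar_lub (fun y : Rbar => exists k : nat, y = mu (alpha k) (beta k)))
                 (Finite 1))
  (P : nat -> pseq)
  (hP0 : exists L : R, 0 < L /\
           forall i : Z, norm_inf n (pt_sub (P 0%nat (i + 1)%Z) (P 0%nat i)) < L)
  (hP : forall k : nat, P (S k) = CC (alpha k) (beta k) (P k)) :
  exists F : R -> pt,
    (forall j : nat, (j < n)%nat -> continuity (fun t => F t j)) /\
    (forall eps : R, 0 < eps -> exists K : nat, forall k : nat, (K <= k)%nat ->
       Rbar_le
         (Lub_Rbar (fun x => exists i : Z,
            x = norm_inf n (pt_sub (F (IZR i / 2 ^ k)) (P k i))))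
         (Finite eps)).
Proof.
  destruct hP0 as [L [hL hL0]].
  assert (hw : forall k i, 0 < alpha k i /\ 0 < 1 - beta k i /\ 0 < beta k i - alpha k i).
  { intros k i. specialize (hW k). unfold in_W in hW.
    destruct (Glb_Rbar_correct (fun x => exists i : Z,
       x = Rmin (alpha k i) (Rmin (1 - beta k i) (beta k i - alpha k i)))) as [hlb _].
    set (g := Glb_Rbar _) in *.
    assert (hx := hlb _ (ex_intro _ i eq_refl)).
    assert (hpos : 0 < Rmin (alpha k i) (Rmin (1 - beta k i) (beta k i - alpha k i))).
    { destruct g as [g| |]; simpl in *; try tauto. lra. }
    pose proof (Rmin_l (alpha k i) (Rmin (1 - beta k i) (beta k i - alpha k i))).
    pose proof (Rmin_r (alpha k i) (Rmin (1 - beta k i) (beta k i - alpha k i))).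
    pose proof (Rmin_l (1 - beta k i) (beta k i - alpha k i)).
    pose proof (Rmin_r (1 - beta k i) (beta k i - alpha k i)).
    lra. }
  set (s := Rbar_lub (fun y : Rbar => exists k : nat, y = mu (alpha k) (beta k))) in *.
  set (m0 := match s with Finite r => Rmax r 0 | _ => 0 end).
  assert (hm0 : 0 <= m0 < 1).
  { unfold m0. destruct s as [r| |]; simpl in hmu; try tauto; [split; [apply Rmax_r|apply Rmax_lub_lt; lra] | lra]. }
  assert (hmb : forall k i, Rmax (beta k i - alpha k i) (1 - beta k (i - 1)%Z + alpha k i) <= m0).
  { intros k i.
    assert (h1 : Rbar_le (mu (alpha k) (beta k)) s).
    { destruct (proj2_sig (Rbar_ex_lub (fun y : Rbar => exists k : nat, y = mu (alpha k) (beta k)))) as [hub _].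
      apply hub. exists k. reflexivity. }
    destruct (Lub_Rbar_correct (fun x => exists i : Z,
      x = Rmax (beta k i - alpha k i) (1 - beta k (i - 1)%Z + alpha k i))) as [hub _].
    assert (h2 := hub _ (ex_intro _ i eq_refl)).
    unfold mu in h1. fold s in h1.
    assert (h3 := Rbar_le_trans _ _ _ h2 h1).
    unfold m0. destruct s as [r| |]; simpl in h3, hmu; try tauto.
    eapply Rle_trans; [exact h3|apply Rmax_l]. }
  set (mu0 := m0) in *.
  assert (Hm1 : forall k i, beta k i - alpha k i <= mu0).
  { intros k i. eapply Rle_trans; [apply Rmax_l|apply (hmb k i)]. }
  assert (Hm2 : forall k i, 1 - beta k i + alpha k (i + 1)%Z <= mu0).
  { intros k i. specialize (hmb k (i + 1)%Z). replace (i + 1 - 1)%Z with i in hmb by lia.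
    eapply Rle_trans; [apply Rmax_r|apply hmb]. }
  set (pj := fun (j : nat) (k : nat) (i : Z) => P k i j).
  assert (Hev : forall j k i, pj j (S k) (2 * i)%Z = (1 - alpha k i) * pj j k i + alpha k i * pj j k (i + 1)%Z).
  { intros j k i. unfold pj. rewrite hP, CC_even. reflexivity. }
  assert (Hod : forall j k i, pj j (S k) (2 * i + 1)%Z = (1 - beta k i) * pj j k i + beta k i * pj j k (i + 1)%Z).
  { intros j k i. unfold pj. rewrite hP, CC_odd. reflexivity. }
  assert (Hd : forall j, (j < n)%nat -> forall k i, Rabs (pj j k (i + 1)%Z - pj j k i) <= L * mu0 ^ k).
  { intros j hj. apply (diff_bound (pj j) alpha beta mu0 L (Hev j) (Hod j)).
    - intros k i. destruct (hw k i). lra.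
    - intros k i. destruct (hw k i). lra.
    - intros k i. destruct (hw k i). lra.
    - exact Hm1.
    - exact Hm2.
    - intros i. apply Rlt_le. eapply Rle_lt_trans; [|apply (hL0 i)].
      apply (norm_inf_ge n (pt_sub (P 0%nat (i + 1)%Z) (P 0%nat i)) j hj). }
  assert (Hst : forall j, (j < n)%nat -> forall k t, Rabs (gs (pj j) (S k) t - gs (pj j) k t) <= L * mu0 ^ k).
  { intros j hj. apply g_step.
    - intros k i. rewrite Hev.
      replace ((1 - alpha k i) * pj j k i + alpha k i * pj j k (i + 1)%Z - pj j k i)
        with (alpha k i * (pj j k (i + 1)%Z - pj j k i)) by ring.
      rewrite Rabs_mult. destruct (hw k i) as [h1 [h2 h3]].
      rewrite Rabs_pos_eq by lra. specialize (Hd j hj k i).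
      assert (0 <= L * mu0 ^ k) by (eapply Rle_trans; [apply Rabs_pos|exact Hd]).
      assert (alpha k i * Rabs (pj j k (i + 1)%Z - pj j k i) <= alpha k i * (L * mu0 ^ k))
        by (apply Rmult_le_compat_l; lra).
      nra.
    - intros k i. rewrite Hod.
      replace ((1 - beta k i) * pj j k i + beta k i * pj j k (i + 1)%Z - pj j k i)
        with (beta k i * (pj j k (i + 1)%Z - pj j k i)) by ring.
      rewrite Rabs_mult. destruct (hw k i) as [h1 [h2 h3]].
      rewrite Rabs_pos_eq by lra. specialize (Hd j hj k i).
      assert (0 <= L * mu0 ^ k) by (eapply Rle_trans; [apply Rabs_pos|exact Hd]).
      assert (beta k i * Rabs (pj j k (i + 1)%Z - pj j k i) <= beta k i * (L * mu0 ^ k))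
        by (apply Rmult_le_compat_l; lra).
      nra. }
  destruct hm0 as [hm0a hm0b].
  set (F := fun (t : R) (j : nat) => real (Lim_seq (fun m => gs (pj j) m t))).
  assert (HF : forall j, (j < n)%nat -> forall t k, Rabs (F t j - gs (pj j) k t) <= L * mu0 ^ k / (1 - mu0)).
  { intros j hj. apply (g_limit (pj j) L mu0 hm0a hm0b hL (Hst j hj)). }
  exists F. split.
  - intros j hj. apply (F_cont (pj j) L mu0 hm0a hm0b hL (fun t => F t j) (Hd j hj) (HF j hj)).
  - intros eps heps.
    assert (hy : 0 < eps * (1 - mu0) / L) by (apply Rdiv_lt_0_compat; [apply Rmult_lt_0_compat; lra | lra]).
    destruct (pow_lt_1_zero mu0 ltac:(rewrite Rabs_pos_eq; lra) _ hy) as [K hK].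
    exists K. intros k hk.
    specialize (hK k hk). rewrite Rabs_pos_eq in hK by (apply pow_le; lra).
    assert (hE : L * mu0 ^ k / (1 - mu0) <= eps).
    { apply (Rmult_lt_compat_l L) in hK; [|lra].
      replace (L * (eps * (1 - mu0) / L)) with (eps * (1 - mu0)) in hK by (field; lra).
      apply (Rmult_le_reg_r (1 - mu0)); [lra|].
      replace (L * mu0 ^ k / (1 - mu0) * (1 - mu0)) with (L * mu0 ^ k) by (field; lra). lra. }
    destruct (Lub_Rbar_correct (fun x => exists i : Z,
            x = norm_inf n (pt_sub (F (IZR i / 2 ^ k)) (P k i)))) as [_ hleast].
    apply hleast. intros x [i ->]. simpl.
    apply norm_inf_le; [lra|].
    intros j hj. unfold pt_sub. eapply Rle_trans; [|exact hE].
    specialize (HF j hj (IZR i / 2 ^ k) k).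
    unfold gs in HF.
    assert (hp : 0 < 2 ^ k) by (apply pow_lt; lra).
    replace (IZR i / 2 ^ k * 2 ^ k) with (IZR i) in HF by (field; lra).
    replace (Int_part (IZR i)) with i in HF.
    + exact HF.
    + symmetry. apply Int_part_unique. lra.
Qed.
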